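(* Let $\mathfrak g$ be a $3$-dimensional complex vector space with basis $\{e_1,e_2,e_3\}$ and let $\mu$ be the product with matrix $\begin{pmatrix}0&0&0\\0&0&1\\0&i&0\end{pmatrix}$, i.e. $\mu(e_2,e_3)=0$, $\mu(e_3,e_1)=ie_3$, $\mu(e_1,e_2)=e_2$. Then $T\in\operatorname{HL}(\mu)$ if and only if its matrix has the block form $T=\begin{pmatrix}T_{11}&0\\ v&\Theta\end{pmatrix}$ with $T_{11}\in\mathbb C$, $v\in\mathbb C^2$, $\Theta\in\operatorname{Mat}_{2\times2}(\mathbb C)$ (i.e. $T_{12}=T_{13}=0$). Moreover, for such $T$, the condition $\det(\Theta-T_{11}\mathbb 1_2)\neq0$ is invariant under the $G_\mu$-action, and: (1) if $\det(\Theta-T_{11}\mathbb 1_2)\neq 0$ then $T$ is equivalent to a map of the form $\begin{pmatrix}T'_{11}&0\\0&\Theta'\end{pmatrix}$ with $T'_{11}\in\mathbb C$, $\Theta'\in\operatorname{Mat}_{2\times 2}(\mathbb C)$; (2) if $\det(\Theta-T_{11}\mathbb 1_2)=0$ then $T$ is equivalent to a map of the form $\begin{pmatrix}T'_{11}&0\\ v'&\Theta'\end{pmatrix}$ with $\det(\Theta'-T'_{11}\mathbb 1_2)=0$.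
   Context: The matrix $(T_{ij})$ of a linear map in the basis $\{e_j\}$ is defined by $T(e_j)=\sum_iT_{ij}e_i$. $\operatorname{HL}(\mu)$ is the set of linear maps $T:\mathfrak g\to\mathfrak g$ with $\mu(T(x),\mu(y,z))+\mu(T(y),\mu(z,x))+\mu(T(z),\mu(x,y))=0$ for all $x,y,z$. $G_\mu=\{g\in\operatorname{GL}(\mathfrak g)\mid g(\mu(x,y))=\mu(g(x),g(y))\ \forall x,y\}$ is the automorphism group of $\mu$; it acts on $\operatorname{HL}(\mu)$ by $T\mapsto gTg^{-1}$, and $T,T'$ are equivalent if $T'=gTg^{-1}$ for some $g\in G_\mu$. *)

(* Defs.v *)
(* The complex field is rendered as an arbitrary
   numClosedFieldType C (algebraically closed field with 'i, e.g. algC / ℂ). *)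
From HB Require Import structures.
From mathcomp Require Import all_boot all_order all_algebra.
Set Implicit Arguments. Unset Strict Implicit. Unset Printing Implicit Defensive.
Import Order.TTheory GRing.Theory Num.Theory.
Local Open Scope ring_scope.

Section Defs.
Variable C : numClosedFieldType.

(* vectors of g = C^3 are column vectors; basis e_1,e_2,e_3 = indices 0,1,2 *)
Definition i1 : 'I_3 := @Ordinal 3 0 isT.
Definition i2 : 'I_3 := @Ordinal 3 1 isT.
Definition i3 : 'I_3 := @Ordinal 3 2 isT.

(* the bilinear skew product with mu(e2,e3)=0, mu(e3,e1)= i e3, mu(e1,e2)= e2 :
   mu(x,y) = (x2y3-x3y2)*0 + (x3y1-x1y3) * i e3 + (x1y2-x2y1) * e2 *)
Definition mu (x y : 'cV[C]_3) : 'cV[C]_3 :=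
  \col_(k < 3)
    (if k == i2 then x i1 0 * y i2 0 - x i2 0 * y i1 0
     else if k == i3 then 'i * (x i3 0 * y i1 0 - x i1 0 * y i3 0)
     else 0).

(* T acts on column vectors: T(e_j) = sum_i T_ij e_i *)
Definition HL (T : 'M[C]_3) : Prop :=
  forall x y z : 'cV[C]_3,
    mu (T *m x) (mu y z) + mu (T *m y) (mu z x) + mu (T *m z) (mu x y) = 0.

Definition Gmu (g : 'M[C]_3) : Prop :=
  g \in unitmx /\ forall x y : 'cV[C]_3, g *m mu x y = mu (g *m x) (g *m y).

Definition equivHL (T T' : 'M[C]_3) : Prop :=
  exists g, Gmu g /\ T' = g *m T *m invmx g.

Definition Theta (T : 'M[C]_3) : 'M[C]_2 :=
  \matrix_(a < 2, b < 2) T (lift ord0 a) (lift ord0 b).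

Definition detcond (T : 'M[C]_3) : C := \det (Theta T - (T i1 i1)%:M).

End Defs.

(* Main.v *)
Require Import Defs.
From HB Require Import structures.
From mathcomp Require Import all_boot all_order all_algebra.
From mathcomp Require Import ring.
Import Order.TTheory GRing.Theory Num.Theory.
Local Open Scope ring_scope.

Section H.

Variable C : numClosedFieldType.

Lemma sum3 (F : 'I_3 -> C) : \sum_(k < 3) F k = F i1 + F i2 + F i3.
Proof.
rewrite !big_ord_recl big_ord0 addr0 addrA.
congr (F _ + F _ + F _); exact: val_inj.
Qed.

Lemma sum2 (F : 'I_2 -> C) : \sum_(k < 2) F k = F ord0 + F ord_max.
Proof.
rewrite !big_ord_recl big_ord0 addr0.
congr (F _ + F _); exact: val_inj.
Qed.

Lemma ord3P (k : 'I_3) : k = i1 \/ k = i2 \/ k = i3.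
Proof.
case: k => [[|[|[|n]]] Hn].
- by left; apply: val_inj.
- by right; left; apply: val_inj.
- by right; right; apply: val_inj.
- by [].
Qed.

Lemma det2 (A : 'M[C]_2) : \det A = A ord0 ord0 * A ord_max ord_max - A ord0 ord_max * A ord_max ord0.
Proof.
rewrite (expand_det_row _ ord0) sum2 /cofactor !det_mx11 !mxE /=.
have -> : lift ord0 (0 : 'I_1) = ord_max by apply: val_inj.
have -> : lift ord_max (0 : 'I_1) = ord0 by apply: val_inj.
rewrite !expr0 !expr1. ring.
Qed.

Lemma detcondE (T : 'M[C]_3) : detcond T =
  (T i2 i2 - T i1 i1) * (T i3 i3 - T i1 i1) - T i2 i3 * T i3 i2.
Proof.
rewrite /detcond det2 !mxE /=.
have -> : lift ord0 (ord0 : 'I_2) = i2 by apply: val_inj.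
have -> : lift ord0 (ord_max : 'I_2) = i3 by apply: val_inj.
rewrite !mulr1n !mulr0n. ring.
Qed.

Lemma det3 (A : 'M[C]_3) : \det A =
  A i1 i1 * (A i2 i2 * A i3 i3 - A i2 i3 * A i3 i2)
  - A i1 i2 * (A i2 i1 * A i3 i3 - A i2 i3 * A i3 i1)
  + A i1 i3 * (A i2 i1 * A i3 i2 - A i2 i2 * A i3 i1).
Proof.
rewrite (expand_det_row _ i1) sum3 /cofactor !det2 !mxE /=.
have -> : lift i1 (ord0 : 'I_2) = i2 by apply: val_inj.
have -> : lift i1 (ord_max : 'I_2) = i3 by apply: val_inj.
have -> : lift i2 (ord0 : 'I_2) = i1 by apply: val_inj.
have -> : lift i2 (ord_max : 'I_2) = i3 by apply: val_inj.
have -> : lift i3 (ord0 : 'I_2) = i1 by apply: val_inj.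
have -> : lift i3 (ord_max : 'I_2) = i2 by apply: val_inj.
rewrite !add0n. ring.
Qed.

Lemma mxE3 (A B : 'M[C]_3) i j : (A *m B) i j = A i i1 * B i1 j + A i i2 * B i2 j + A i i3 * B i3 j.
Proof. by rewrite mxE sum3. Qed.

Lemma mvE3 (A : 'M[C]_3) (x : 'cV[C]_3) i : (A *m x) i 0 = A i i1 * x i1 0 + A i i2 * x i2 0 + A i i3 * x i3 0.
Proof. by rewrite mxE sum3. Qed.

Lemma mu1 x y : mu x y i1 0 = 0 :> C. Proof. by rewrite mxE. Qed.
Lemma mu2 x y : mu x y i2 0 = x i1 0 * y i2 0 - x i2 0 * y i1 0 :> C. Proof. by rewrite mxE. Qed.
Lemma mu3 x y : mu x y i3 0 = 'i * (x i3 0 * y i1 0 - x i1 0 * y i3 0) :> C. Proof. by rewrite mxE. Qed.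


Lemma mu2mu x y z : mu x (mu y z) i2 0 = x i1 0 * (y i1 0 * z i2 0 - y i2 0 * z i1 0) :> C.
Proof. rewrite mu2 mu1 mu2; ring. Qed.
Lemma mu3mu x y z : mu x (mu y z) i3 0 = x i1 0 * (y i3 0 * z i1 0 - y i1 0 * z i3 0) :> C.
Proof.
rewrite mu3 mu1 mu3.
set X := (_ - _ * z i3 0).
have -> : 'i * (x i3 0 * 0 - x i1 0 * ('i * X)) = - ('i ^+ 2) * (x i1 0 * X) by ring.
by rewrite sqrCi opprK mul1r.
Qed.

Definition col3 (a b c : C) : 'cV[C]_3 :=
  \col_(k < 3) (if k == i1 then a else if k == i2 then b else c).
Lemma c1 a b c : col3 a b c i1 0 = a. Proof. by rewrite mxE. Qed.
Lemma c2 a b c : col3 a b c i2 0 = b. Proof. by rewrite mxE. Qed.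
Lemma c3 a b c : col3 a b c i3 0 = c. Proof. by rewrite mxE. Qed.

Lemma addE (A B : 'cV[C]_3) i : (A + B) i 0 = A i 0 + B i 0.
Proof. by rewrite mxE. Qed.
Lemma mxE0 i : (0 : 'cV[C]_3) i 0 = 0. Proof. by rewrite mxE. Qed.

Lemma HL_iff (T : 'M[C]_3) : HL T <-> (T i1 i2 = 0 /\ T i1 i3 = 0).
Proof.
split.
- move=> h; have := h (col3 1 0 0) (col3 0 1 0) (col3 0 0 1).
  move/matrixP => hm.
  have h2 := hm i2 0; have h3 := hm i3 0.
  rewrite !addE ?mxE0 !mu2mu !mu3mu !mvE3 !c1 !c2 !c3 in h2 h3.
  by split; [rewrite -h3 | rewrite -h2]; ring.
- move=> [h12 h13] x y z; apply/matrixP => k l; rewrite ord1.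
  by case: (ord3P k) => [->|[->|->]];
    rewrite !addE mxE0 ?mu1 ?mu2mu ?mu3mu ?mvE3 ?h12 ?h13; ring.
Qed.

Definition mx3 (l : seq (seq C)) : 'M[C]_3 := \matrix_(i < 3, j < 3) nth 0 (nth [::] l i) j.

Lemma invmx_eq (g h : 'M[C]_3) : g \in unitmx -> g *m h = 1%:M -> invmx g = h.
Proof.
move=> gU gh; by rewrite -[invmx g]mulmx1 -gh mulmxA mulVmx // mul1mx.
Qed.

Lemma Gmu_zero (g : 'M[C]_3) : Gmu g -> g i1 i2 = 0 /\ g i1 i3 = 0.
Proof.
move=> [_ h].
have := h (col3 1 0 0) (col3 0 1 0) => /matrixP /(_ i1 0).
rewrite mvE3 !mu1 !mu2 !mu3 !c1 !c2 !c3 => e12.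
have := h (col3 0 0 1) (col3 1 0 0) => /matrixP /(_ i1 0).
rewrite mvE3 !mu1 !mu2 !mu3 !c1 !c2 !c3 => e13.
split.
- rewrite -e12; ring.
- have : 'i * g i1 i3 = 0 by rewrite -e13; ring.
  by move/eqP; rewrite mulf_eq0 (negbTE (neq0Ci C)) /= => /eqP.
Qed.

Lemma part2 (T g : 'M[C]_3) : HL T -> Gmu g ->
     (detcond T != 0) = (detcond (g *m T *m invmx g) != 0).
Proof.
move=> /HL_iff [t12 t13] hg.
have [g12 g13] := Gmu_zero g hg.
have gU : g \in unitmx by case: hg.
have := gU; rewrite unitmxE unitfE det3 g12 g13.
set a : C := g i1 i1; set b : C := g i2 i1; set c : C := g i3 i1;
set p : C := g i2 i2; set q : C := g i2 i3; set r : C := g i3 i2; set s : C := g i3 i3 => hdet.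
move: hdet; rewrite !mul0r subr0 addr0 mulf_eq0 negb_or => /andP[ha hd].
set h0 := mx3 [:: [:: a^-1; 0; 0];
                  [:: (q * c - s * b) / (a * (p * s - q * r)); s / (p * s - q * r); - q / (p * s - q * r)];
                  [:: (r * b - p * c) / (a * (p * s - q * r)); - r / (p * s - q * r); p / (p * s - q * r)]].
have -> : invmx g = h0.
  apply: invmx_eq => //; apply/matrixP => i j.
  case: (ord3P i) => [->|[->|->]]; case: (ord3P j) => [->|[->|->]];
  rewrite mxE3 !mxE /= -/a -/b -/c -/p -/q -/r -/s ?g12 ?g13;
  by field; rewrite ?ha ?hd.
congr (~~ (_ == 0)).
rewrite !detcondE !mxE3 !mxE /= -/a -/b -/c -/p -/q -/r -/s ?g12 ?g13 ?t12 ?t13.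
by field; rewrite ?ha ?hd.
Qed.

Lemma Gmu_shear (w2 w3 : C) :
  Gmu (mx3 [:: [:: 1; 0; 0]; [:: w2; 1; 0]; [:: w3; 0; 1]]).
Proof.
split.
- by rewrite unitmxE unitfE det3 !mxE /= !mulr0 !mul0r !subr0 addr0 mulr1 mul1r oner_neq0.
- move=> x y; apply/matrixP => k l; rewrite ord1.
  by case: (ord3P k) => [->|[->|->]]; rewrite !mvE3 ?mu1 ?mu2 ?mu3 ?mvE3 !mxE /=; ring.
Qed.

Lemma part3 (T : 'M[C]_3) : HL T -> detcond T != 0 ->
     exists T', equivHL T T' /\
       T' i1 i2 = 0 /\ T' i1 i3 = 0 /\ T' i2 i1 = 0 /\ T' i3 i1 = 0.
Proof.
move=> /HL_iff [t12 t13]; rewrite detcondE => hd.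
set d := _ - _ in hd.
set w2 := ((T i3 i3 - T i1 i1) * T i2 i1 - T i2 i3 * T i3 i1) / d.
set w3 := (- T i3 i2 * T i2 i1 + (T i2 i2 - T i1 i1) * T i3 i1) / d.
set g := mx3 [:: [:: 1; 0; 0]; [:: w2; 1; 0]; [:: w3; 0; 1]].
set h := mx3 [:: [:: 1; 0; 0]; [:: -w2; 1; 0]; [:: -w3; 0; 1]].
have hg : Gmu g by apply: Gmu_shear.
have gU : g \in unitmx by case: hg.
have gh : invmx g = h.
  apply: invmx_eq => //; apply/matrixP => i j.
  by case: (ord3P i) => [->|[->|->]]; case: (ord3P j) => [->|[->|->]];
    rewrite mxE3 !mxE /=; ring.
exists (g *m T *m h); split; first by exists g; rewrite gh.
rewrite !mxE3 !mxE /= t12 t13 /w2 /w3 /d.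
split; first ring. split; first ring.
by split; field; rewrite ?hd.
Qed.

Lemma part4 (T : 'M[C]_3) : HL T -> detcond T = 0 ->
     exists T', equivHL T T' /\
       T' i1 i2 = 0 /\ T' i1 i3 = 0 /\ detcond T' = 0.
Proof.
move=> hT hd; have [t12 t13] := proj1 (HL_iff T) hT.
exists T; split => //.
exists 1%:M; split; last by rewrite mul1mx invmx1 mulmx1.
split; first by rewrite unitmx1.
by move=> x y; rewrite !mul1mx.
Qed.

End H.

Theorem proposition5p4 (C : numClosedFieldType) :
  (forall T : 'M[C]_3, HL T <-> (T i1 i2 = 0 /\ T i1 i3 = 0)) /\
  (forall T g : 'M[C]_3, HL T -> Gmu g ->
     (detcond T != 0) = (detcond (g *m T *m invmx g) != 0)) /\
  (forall T : 'M[C]_3, HL T -> detcond T != 0 ->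
     exists T', equivHL T T' /\
       T' i1 i2 = 0 /\ T' i1 i3 = 0 /\ T' i2 i1 = 0 /\ T' i3 i1 = 0) /\
  (forall T : 'M[C]_3, HL T -> detcond T = 0 ->
     exists T', equivHL T T' /\
       T' i1 i2 = 0 /\ T' i1 i3 = 0 /\ detcond T' = 0).
Proof.
split; first exact: HL_iff.
split; first exact: part2.
split; first exact: part3.
exact: part4.
Qed.
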